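(* Let $\mu$ be a probability measure on $\mathbb{C}$, $X_1,X_2,\ldots$ iid with law $\mu$, $0\le k_n\le n$ deterministic with $k_n = o(n)$, $\xi_l^{(n)}$ a deterministic triangular array, and $L_n(z) := \sum_{j=1}^{n-k_n}\frac{1}{z - X_j} + \sum_{l=1}^{k_n}\frac{1}{z - \xi_l^{(n)}}$. Then there is a set $G \subset (0,\infty)$ of Lebesgue measure zero such that for every $R \in (0,\infty)\setminus G$, \[ \limsup_{n\to\infty}\frac{1}{n}\log\sup_{|z| = R}|L_n(z)| \le 0 \] almost surely. *)

(* Defs.v *)
From HB Require Import structures.
From mathcomp Require Import all_boot all_order all_algebra.
From mathcomp Require Import all_classical all_reals all_analysis.
From mathcomp Require Import complex.
Set Implicit Arguments. Unset Strict Implicit. Unset Printing Implicit Defensive.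
Import Order.TTheory GRing.Theory Num.Theory.
Local Open Scope classical_set_scope.
Local Open Scope ring_scope.

(* The complex plane, as a measurable space, is R * R with the product
   (= Borel) sigma-algebra; [toC] identifies a point of R * R with a complex
   number in R[i]. *)
Definition toC (R : realType) (p : R * R) : R[i] := (p.1 +i* p.2)%C.

Definition mutually_independent (d : measure_display) (T : measurableType d)
  (R : realType) (P : probability T R) (d' : measure_display)
  (T' : measurableType d') (X : nat -> T -> T') : Prop :=
  forall (s : seq nat) (B : nat -> set T'), uniq s ->
    (forall i, i \in s -> measurable (B i)) ->
    P (\bigcap_(i in [set i | i \in s]) (X i @^-1` B i)) =
    (\prod_(i <- s) P (X i @^-1` B i))%E.

Definition iid_with_law (d : measure_display) (T : measurableType d)
  (R : realType) (P : probability T R) (d' : measure_display)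
  (T' : measurableType d') (mu : probability T' R) (X : nat -> T -> T') : Prop :=
  [/\ forall i, measurable_fun setT (X i),
      forall i (B : set T'), measurable B -> P (X i @^-1` B) = mu B &
      mutually_independent P X].

(* L_n(z) = sum_{j=1}^{n-k_n} 1/(z - X_j) + sum_{l=1}^{k_n} 1/(z - xi_l^(n)),
   indices shifted to start at 0. *)
Definition resolvent_sum (R : realType) (x : nat -> R[i]) (k : nat -> nat)
  (xi : nat -> nat -> R[i]) (n : nat) (z : R[i]) : R[i] :=
  \sum_(j < n - k n) (z - x j)^-1 + \sum_(l < k n) (z - xi n l)^-1.

(* sup_{|z| = r} |L_n(z)|, as an extended real (equals +oo when unbounded,
   e.g. when a pole lies on the circle). *)
Definition supCircle (R : realType) (f : R[i] -> R[i]) (r : R) : \bar R :=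
  ereal_sup [set (ComplexField.Normc.normc (f z))%:E | z in [set z : R[i] | ComplexField.Normc.normc z = r]].

Definition elog (R : realType) (x : \bar R) : \bar R :=
  match x with
  | EFin r => if (0 < r)%R then (ln r)%:E else -oo%E
  | +oo%E => +oo%E
  | -oo%E => -oo%E
  end.

(* Main.v *)
Require Import Defs.
From HB Require Import structures.
From mathcomp Require Import all_boot all_order all_algebra.
From mathcomp Require Import all_classical all_reals all_analysis.
From mathcomp Require Import complex.
From mathcomp Require Import measurable_realfun.
From mathcomp Require Import ring lra.
Import Order.TTheory GRing.Theory Num.Theory.
Import numFieldNormedType.Exports.
Local Open Scope classical_set_scope.
Local Open Scope ring_scope.

Section Part1.
Variable R : realType.
Local Notation nc := (@ComplexField.Normc.normc R).

Lemma nc_ge0 (z : R[i]) : 0 <= nc z.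
Proof. by case: z => a b; rewrite /ComplexField.Normc.normc sqrtr_ge0. Qed.

Lemma ncD (x y : R[i]) : nc (x + y) <= nc x + nc y.
Proof. exact: (@le_normcD R x y). Qed.

Lemma ncN (x : R[i]) : nc (- x) = nc x.
Proof. exact: (@normcN R x). Qed.

Lemma nc_rev (z x : R[i]) : `|nc z - nc x| <= nc (z - x).
Proof.
rewrite ler_norml; apply/andP; split.
- have e : nc (x - z) = nc (z - x) by rewrite -ncN opprB.
  have := ncD (x - z) z; rewrite subrK e; lra.
- have := ncD (z - x) x; rewrite subrK; lra.
Qed.

Lemma nc_sum (s : seq nat) (F : nat -> R[i]) :
  nc (\sum_(i <- s) F i) <= \sum_(i <- s) nc (F i).
Proof.
elim: s => [|a s IH]; first by rewrite !big_nil ComplexField.Normc.normc0.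
rewrite !big_cons; apply: le_trans (ncD _ _) _; exact: lerD.
Qed.

Lemma nc_inv_le (z x : R[i]) (d : R) : 0 < d -> d <= `|nc z - nc x| ->
  nc ((z - x)^-1) <= d^-1.
Proof.
move=> d0 hd; rewrite ComplexField.Normc.normcV.
have h := le_trans hd (nc_rev z x).
rewrite lef_pV2 ?posrE //; exact: lt_le_trans h.
Qed.

Lemma resolvent_bound (x y : nat -> R[i]) (m1 m2 : nat) (r d : R) (z : R[i]) :
  0 < d -> nc z = r ->
  (forall j, (j < m1)%N -> d <= `|nc (x j) - r|) ->
  (forall l, (l < m2)%N -> d <= `|nc (y l) - r|) ->
  nc (\sum_(j < m1) (z - x j)^-1 + \sum_(l < m2) (z - y l)^-1)
    <= (m1 + m2)%:R * d^-1.
Proof.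
move=> d0 hz hx hy; apply: le_trans (ncD _ _) _.
rewrite natrD mulrDl; apply: lerD.
- rewrite -(big_mkord xpredT (fun j => (z - x j)^-1)).
  apply: le_trans (nc_sum _ _) _.
  apply: (@le_trans _ _ (\sum_(0 <= j < m1) d^-1)); last first.
    by rewrite sumr_const_nat subn0 mulr_natl.
  rewrite big_seq_cond [X in _ <= X]big_seq_cond; apply: ler_sum => j.
  rewrite andbT mem_index_iota => /andP[_ jm]; apply: nc_inv_le => //.
  by rewrite hz distrC; exact: hx.
- rewrite -(big_mkord xpredT (fun j => (z - y j)^-1)).
  apply: le_trans (nc_sum _ _) _.
  apply: (@le_trans _ _ (\sum_(0 <= j < m2) d^-1)); last first.
    by rewrite sumr_const_nat subn0 mulr_natl.
  rewrite big_seq_cond [X in _ <= X]big_seq_cond; apply: ler_sum => j.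
  rewrite andbT mem_index_iota => /andP[_ jm]; apply: nc_inv_le => //.
  by rewrite hz distrC; exact: hy.
Qed.
End Part1.

Section Part2.
Variable R : realType.
Local Notation nc := (@ComplexField.Normc.normc R).

Lemma supCircle_le (f : R[i] -> R[i]) (r M : R) :
  (forall z, nc z = r -> nc (f z) <= M) -> (supCircle f r <= M%:E)%E.
Proof.
move=> h; apply: ge_ereal_sup => _ [z /= hz <-]; rewrite lee_fin; exact: h.
Qed.

Lemma elog_le (s : \bar R) (M : R) : 0 < M -> (s <= M%:E)%E -> (elog s <= (ln M)%:E)%E.
Proof.
move=> M0; case: s => [x||] //=; rewrite ?lee_fin => hx; last by rewrite leNye.
case: ifP => x0; last by rewrite leNye.
by rewrite lee_fin ler_ln ?posrE.
Qed.

Lemma ln_poly_small (e : R) : 0 < e -> exists N : nat, forall n : nat, (N <= n)%N ->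
  n%:R^-1 * ln (2 * n.+1%:R ^+ 4) <= e.
Proof.
move=> e0.
pose K := (3840 / e ^+ 5) : R.
exists (Num.Def.trunc K).+1 => n hn.
have n1 : (1 <= n)%N by apply: leq_trans hn.
have nR1 : 1 <= n%:R :> R by rewrite ler1n.
have Kn : K < n%:R.
  apply: lt_le_trans (truncnS_gt K) _; by rewrite ler_nat.
have e5 : 0 < e ^+ 5 by rewrite exprn_gt0.
have h1 : 3840 <= e ^+ 5 * n%:R.
  by rewrite -ler_pdivrMl // mulrC; apply: ltW.
have h2 : 2 * n.+1%:R ^+ 4 <= expR (e * n%:R).
  apply: le_trans (expR_ge1Dxn 4 _) ; last by apply: mulr_ge0; [exact: ltW|lra].
  rewrite (_ : 5`!%:R = 120 :> R) //; rewrite -[n.+1%:R]natr1.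
  set m : R := n%:R.
  have m0 : 0 <= m by lra.
  have h3 : 2 * (m + 1) ^+ 4 <= 32 * m ^+ 4.
    have : m + 1 <= 2 * m by lra.
    move=> hm. have hm2 : (m + 1) ^+ 4 <= (2 * m) ^+ 4.
      by rewrite lerXn2r // ?nnegrE; lra.
    rewrite exprMn in hm2; have e16 : (2:R) ^+ 4 = 16 by rewrite !exprS expr0; lra.
    rewrite e16 in hm2; lra.
  apply: le_trans h3 _.
  rewrite exprMn.
  have m4 : 0 <= m ^+ 4 by rewrite exprn_ge0.
  have : 32 * m ^+ 4 <= e ^+ 5 * m ^+ 5 / 120.
    rewrite exprS (mulrC m) mulrA.
    rewrite ler_pdivlMr //.
    have : 3840 * m ^+ 4 <= (e ^+ 5 * m) * m ^+ 4 by rewrite ler_wpM2r.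
    lra.
  lra.
have hpos : 0 < 2 * n.+1%:R ^+ 4 :> R by rewrite mulr_gt0 // exprn_gt0.
have h4 : ln (2 * n.+1%:R ^+ 4) <= e * n%:R.
  by rewrite -[X in _ <= X]expRK ler_ln ?posrE ?expR_gt0.
have n0 : 0 < n%:R :> R by lra.
by rewrite ler_pdivrMl // [_ * e]mulrC.
Qed.

Lemma limn_esup_le0 (u : (\bar R)^nat) (a : R^nat) (N0 : nat) :
  (forall n, (N0 <= n)%N -> (u n <= (a n)%:E)%E) ->
  (forall e, 0 < e -> exists N, forall n, (N <= n)%N -> a n <= e) ->
  (limn_esup u <= 0)%E.
Proof.
move=> hu ha; apply/lee_addgt0Pr => e e0; rewrite add0e.
have [N hN] := ha e e0.
apply: ge_ereal_inf; exists (ereal_sup (u @` [set n | (maxn N0 N <= n)%N])).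
  exists [set n | (maxn N0 N <= n)%N] => //; exact: nbhs_infty_ge.
apply: ge_ereal_sup => _ [n /= hn <-].
rewrite geq_max in hn; case/andP: hn => h1 h2.
apply: le_trans (hu _ h1) _; rewrite lee_fin; exact: hN.
Qed.
End Part2.

Section Part3.
Variables (R : realType) (d : measure_display) (Omega : measurableType d)
  (P : probability Omega R) (X : nat -> Omega -> (R * R)%type)
  (k : nat -> nat) (xi : nat -> nat -> R[i]).
Hypothesis mX : forall i, measurable_fun setT (X i).
Local Notation nc := (@ComplexField.Normc.normc R).
Local Notation leb := (@lebesgue_measure R).
Local Notation mR := (measurableTypeR R).

Definition nc2 (p : R * R) : R := nc (toC p).

Lemma measurable_nc2 : measurable_fun setT nc2.
Proof.
have -> : nc2 = fun p => Num.sqrt (p.1 ^+ 2 + p.2 ^+ 2) by apply/funext; case.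
apply: measurableT_comp; first exact: continuous_measurable_fun (@sqrt_continuous R).
by apply: measurable_funD; apply: measurable_funX;
  [exact: measurable_fst|exact: measurable_snd].
Qed.

Definition dl (n : nat) : R := (2 * n.+1%:R ^+ 3)^-1.

Lemma dl_gt0 n : 0 < dl n.
Proof. by rewrite /dl invr_gt0 mulr_gt0 // exprn_gt0. Qed.

Definition cf (n i : nat) : Omega -> R :=
  if (i < n - k n)%N then fun w => nc2 (X i w)
  else fun _ => nc (xi n (i - (n - k n))).

Lemma measurable_cf n i : measurable_fun setT (cf n i).
Proof.
rewrite /cf; case: ifP => _; last exact: measurable_cst.
exact: measurableT_comp measurable_nc2 (mX i).
Qed.

Definition Sn (n i : nat) : set (Omega * mR) :=
  [set p | `|cf n i p.1 - (p.2 : R)| < dl n].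

Lemma measurable_Sn n i : measurable (Sn n i).
Proof.
have -> : Sn n i = (fun p : Omega * mR => cf n i p.1 - (p.2 : R)) @^-1` `]- dl n, dl n[.
  apply/funext => p /=; rewrite /Sn /= in_itv /= ltr_norml; exact/propext.
have mf : measurable_fun (setT : set (Omega * mR)) (fun p : Omega * mR => cf n i p.1 - (p.2 : R)).
  apply: measurable_funB; last exact: (measurable_snd : measurable_fun (setT : set (Omega * mR)) (fun p : Omega * mR => (p.2 : R))).
  exact: measurableT_comp (measurable_cf n i) measurable_fst.
by have := mf measurableT _ (measurable_itv `]- dl n, dl n[); rewrite setTI.
Qed.

Definition cnt (n : nat) (p : Omega * mR) : \bar R :=
  (\sum_(i < n) (\1_(Sn n i) p)%:E)%E.

Lemma cnt_ge0 n p : (0 <= cnt n p)%E.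
Proof. by apply: sume_ge0 => i _; rewrite lee_fin /indic; case: (_ \in _). Qed.

Lemma measurable_cnt n : measurable_fun setT (cnt n).
Proof.
apply: emeasurable_sum => i; apply/measurable_EFinP.
exact: measurable_indic (measurable_Sn n i).
Qed.

Definition Fs (p : Omega * mR) : \bar R := (\sum_(n <oo) cnt n p)%E.

Lemma Fs_ge0 p : (0 <= Fs p)%E.
Proof. by apply: nneseries_ge0 => n _ _; exact: cnt_ge0. Qed.

Lemma measurable_Fs : measurable_fun setT Fs.
Proof.
exact: (ge0_emeasurable_sum (fun n x _ _ => cnt_ge0 n x) (fun n _ => measurable_cnt n)).
Qed.

Lemma int_ind n i w : (\int[leb]_r (\1_(Sn n i) (w, r))%:E = (2 * dl n)%:E)%E.
Proof.
transitivity (\int[leb]_r (\1_(ball (cf n i w) (dl n)) r)%:E)%E.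
  by apply: eq_integral => r _; rewrite /indic.
rewrite integral_indic //; last exact: measurable_ball.
rewrite setIT ball_itv.
apply: eq_trans (lebesgue_measure_itv `]cf n i w - dl n, cf n i w + dl n[) _.
rewrite /= lte_fin.
have := dl_gt0 n => h.
rewrite ifT; last lra.
by rewrite -EFinB; congr EFin; lra.
Qed.


Lemma int_cnt n w : (\int[leb]_r cnt n (w, r) = (n%:R * (2 * dl n))%:E)%E.
Proof.
rewrite /cnt ge0_integral_sum //; last first.
  move=> i; apply/measurable_EFinP.
  have h2 : measurable_fun setT (\1_(Sn n i) : Omega * mR -> R).
    exact: measurable_indic (measurable_Sn n i).
  have := (measurableT_comp h2 (pair1_measurable w)); exact.
under eq_bigr do rewrite int_ind.
by rewrite sumEFin sumr_const card_ord [in RHS]mulr_natl.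
Qed.

Lemma partial_le1 N : \sum_(0 <= n < N) n%:R * (2 * dl n) <= 1 - N.+1%:R^-1 :> R.
Proof.
elim: N => [|N IH]; first by rewrite big_geq // invr1 subrr.
rewrite big_nat_recr //=; apply: le_trans (lerD IH (lexx _)) _.
set a : R := N%:R.
have a0 : 0 <= a by rewrite /a ler0n.
have e2 : N.+2%:R = a + 1 + 1 :> R by rewrite /a -!natr1.
have e1 : N.+1%:R = a + 1 :> R by rewrite /a -natr1.
rewrite /dl e2 e1.
have h1 : 0 < a + 1 by lra.
have h2 : 0 < a + 1 + 1 by lra.
have e3 : 2 / (2 * (a + 1) ^+ 3) = ((a + 1) ^+ 3)^-1.
  by field; rewrite -/a; lra.
have e4 : (a + 1)^-1 - (a + 1 + 1)^-1 = ((a + 1) * (a + 1 + 1))^-1.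
  by field; rewrite -/a; apply/andP; split; lra.
rewrite e3.
suff : a * ((a + 1) ^+ 3)^-1 <= ((a + 1) * (a + 1 + 1))^-1 by lra.
have e5 : ((a + 1) * (a + 1 + 1))^-1 - a * ((a + 1) ^+ 3)^-1 = ((a + 1) ^+ 3 * (a + 1 + 1))^-1.
  by field; rewrite -/a; apply/andP; split; lra.
rewrite -subr_ge0 e5 invr_ge0; apply: mulr_ge0; last lra.
by rewrite exprn_ge0 //; lra.
Qed.

Lemma measurable_cnt_w n w : measurable_fun setT (fun r : mR => cnt n (w, r)).
Proof.
have := measurableT_comp (measurable_cnt n) (pair1_measurable w); exact.
Qed.

Lemma int_Fs w : (\int[leb]_r Fs (w, r) <= 1%:E)%E.
Proof.
have mf n : measurable_fun setT (fun r : mR => cnt n (w, r)) := measurable_cnt_w n w.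
rewrite /Fs integral_nneseries //; last by move=> n r _; exact: cnt_ge0.
under eq_eseriesr do rewrite int_cnt.
apply: lime_le; first by apply: is_cvg_nneseries => n _ _; rewrite lee_fin mulr_ge0 // mulr_ge0 // ltW // dl_gt0.
apply: nearW => N; rewrite sumEFin lee_fin; apply: le_trans (partial_le1 N) _.
by rewrite gerBl invr_ge0.
Qed.

Definition Hr (r : mR) : \bar R := (\int[P]_w Fs (w, r))%E.

Lemma Hr_ge0 r : (0 <= Hr r)%E.
Proof. by apply: integral_ge0 => w _; exact: Fs_ge0. Qed.

Lemma measurable_Hr : measurable_fun setT Hr.
Proof.
exact: (@measurable_fun_fubini_tonelli_G _ _ _ _ _ P Fs measurable_Fs Fs_ge0).
Qed.

Lemma int_Hr : (\int[leb]_r Hr r <= 1%:E)%E.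
Proof.
rewrite /Hr -(fubini_tonelli Fs measurable_Fs Fs_ge0).
apply: le_trans (_ : (\int[P]_w (cst 1%:E) w <= 1%:E)%E).
  apply: ge0_le_integral => //.
  - by move=> w _; apply: integral_ge0 => r _; exact: Fs_ge0.
  - exact: (@measurable_fun_fubini_tonelli_F _ _ _ _ _ leb Fs measurable_Fs Fs_ge0).
  - by move=> w _; exact: int_Fs.
by rewrite integral_cst // mul1e; apply: probability_le1.
Qed.

Definition Gset : set R := [set r | 0 < r /\ ~ (Hr r \is a fin_num)].

Lemma Gset_negligible : leb.-negligible Gset.
Proof.
have hint : leb.-integrable setT Hr.
  apply/integrableP; split; first exact: measurable_Hr.
  rewrite (eq_integral Hr); last by move=> r _; rewrite gee0_abs // Hr_ge0.
  exact: le_lt_trans int_Hr (ltry 1).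
have [N [mN N0 hN]] := integrable_ae measurableT hint.
exists N; split => // r [_ hr]; apply: hN => /= h; apply: hr; exact: h.
Qed.

Lemma ae_cond (r : R) : ~ Gset r -> 0 < r ->
  {ae P, forall w, (Fs (w, r) \is a fin_num)}.
Proof.
move=> hG r0.
have hfin : Hr r \is a fin_num.
  case: (boolP (Hr r \is a fin_num)) => // /negP h; exfalso; exact: hG.
have mF : measurable_fun setT (fun w => Fs (w, r)).
  have := measurableT_comp measurable_Fs (pair2_measurable (r : mR)); exact.
have hint : P.-integrable setT (fun w => Fs (w, r)).
  apply/integrableP; split => //.
  rewrite (eq_integral (fun w => Fs (w, r))); last by move=> w _; rewrite gee0_abs // Fs_ge0.
  by rewrite -ge0_fin_numE // Hr_ge0.
have [N [mN N0 hN]] := integrable_ae measurableT hint.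
exists N; split => // w hw; apply: hN => /= h; apply: hw; exact: h.
Qed.


Lemma cnt_ge_ind n i (hi : (i < n)%N) p : ((\1_(Sn n i) p)%:E <= cnt n p)%E.
Proof.
rewrite /cnt (bigD1 (Ordinal hi)) //= leeDl //.
by apply: sume_ge0 => j _; rewrite lee_fin /indic; case: (_ \in _).
Qed.

Lemma eventually_cond w (r : R) : Fs (w, r) \is a fin_num ->
  exists N, forall n, (N <= n)%N -> forall i, (i < n)%N -> dl n <= `|cf n i w - r|.
Proof.
move=> hfin.
have lt : (\sum_(0 <= k <oo) cnt k (w, r) < +oo)%E.
  by rewrite -ge0_fin_numE //; exact: Fs_ge0.
have tl := nneseries_tail_cvg lt (fun k _ => cnt_ge0 k (w, r)).
have [hf cv] := (fine_cvgP _ _).1 tl.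
have [N1 _ hN1] := hf.
have [N2 _ hN2] := cvgr_lt _ cv _ (ltr01 : (0 : R) < 1).
exists (maxn N1 N2) => n hn i hi.
rewrite geq_max in hn; case/andP: hn => hn1 hn2.
have h3 := hN1 n hn1; have h4 := hN2 n hn2.
have hlt : (\sum_(n <= k <oo) cnt k (w, r) < 1%:E)%E.
  by rewrite -(fineK h3) lte_fin.
have hc : (cnt n (w, r) < 1%:E)%E.
  apply: le_lt_trans hlt.
  have := @nneseries_lim_ge R (fun k => cnt k (w, r)) xpredT n n.+1 (fun k _ _ => cnt_ge0 k (w, r)).
  by rewrite big_nat1.
rewrite leNgt; apply/negP => hS.
have hind : ((1:R)%:E <= (\1_(Sn n i) (w, r))%:E)%E.
  by rewrite /indic (mem_set (hS : Sn n i (w, r))).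
have := le_lt_trans hind (le_lt_trans (cnt_ge_ind _ _ hi (w, r)) hc).
by rewrite ltxx.
Qed.


Hypothesis hk : forall n, (k n <= n)%N.

Lemma final_bound w (r : R) :
  (exists N, forall n, (N <= n)%N -> forall i, (i < n)%N -> dl n <= `|cf n i w - r|) ->
  (limn_esup (fun n : nat =>
     (n%:R^-1)%:E * elog (supCircle (resolvent_sum (fun j => toC (X j w)) k xi n) r)) <= 0)%E.
Proof.
case=> N hN.
apply: (@limn_esup_le0 R _ (fun n : nat => n%:R^-1 * ln (2 * n.+1%:R ^+ 4)) N); last first.
  exact: ln_poly_small.
move=> n hn.
have hsup : (supCircle (resolvent_sum (fun j => toC (X j w)) k xi n) r
    <= (2 * n.+1%:R ^+ 4)%:E)%E.
  apply: supCircle_le => z hz; rewrite /resolvent_sum.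
  apply: le_trans (@resolvent_bound R (fun j => toC (X j w)) (xi n)
    (n - k n) (k n) r (dl n) z (dl_gt0 n) hz _ _) _.
  - move=> j hj.
    have hjn : (j < n)%N by apply: leq_trans hj (leq_subr _ _).
    by have := hN n hn j hjn; rewrite /cf hj.
  - move=> l hl.
    have hln : (l + (n - k n) < n)%N.
      by apply: (@leq_trans (k n + (n - k n))); [rewrite ltn_add2r | rewrite subnKC].
    have := hN n hn _ hln; rewrite /cf ifF ?addnK //.
    by apply/negbTE; rewrite -leqNgt leq_addl.
  rewrite subnK ?hk // /dl invrK.
  have n0 : 0 <= n%:R :> R by rewrite ler0n.
  rewrite [X in _ <= 2 * X]exprS -natr1.
  have h3 : 0 <= (n%:R + 1) ^+ 3 :> R by rewrite exprn_ge0 //; lra.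
  have : n%:R * (2 * (n%:R + 1) ^+ 3) <= (n%:R + 1) * (2 * (n%:R + 1) ^+ 3) :> R.
    by rewrite ler_wpM2r ?mulr_ge0 //; lra.
  rewrite -natr1; lra.
rewrite EFinM; apply: lee_wpmul2l; first by rewrite lee_fin invr_ge0 ler0n.
apply: elog_le hsup.
by rewrite mulr_gt0 // exprn_gt0.
Qed.
End Part3.


Theorem mainTheorem17 (R : realType)
  (mu : probability (R * R)%type R)
  (d : measure_display) (Omega : measurableType d) (P : probability Omega R)
  (X : nat -> Omega -> (R * R)%type)
  (k : nat -> nat) (xi : nat -> nat -> R[i]) :
  iid_with_law P mu X ->
  (forall n, (k n <= n)%N) ->
  ((fun n => (k n)%:R / n%:R) : R^nat) @ \oo --> 0%R ->
  exists G : set R,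
    G `<=` `]0, +oo[%classic /\ (@lebesgue_measure R : set R -> \bar R).-negligible G /\
    forall r : R, 0 < r -> ~ G r ->
      {ae P, forall w : Omega,
        (limn_esup (fun n : nat =>
           (n%:R^-1)%:E * elog (supCircle (resolvent_sum (fun j => toC (X j w)) k xi n) r))
         <= 0)%E}.
Proof.
move=> [mX _ _] hk _.
exists (@Gset R d Omega P X k xi); split.
  by move=> r [r0 _] /=; rewrite in_itv /= andbT.
split; first exact: Gset_negligible.
move=> r r0 nG.
have [N [mN N0 hN]] := @ae_cond R d Omega P X k xi mX r nG r0.
exists N; split => // w hw; apply: hN => /= hfin; apply: hw => /=.

apply: (@final_bound R d Omega X k xi hk w r).
exact: (@eventually_cond R d Omega X k xi w r hfin).
Qed.
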